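(* Let $D^+$ and $D^-$ be oriented link diagrams that are identical except at one crossing, which is positive in $D^+$ and negative in $D^-$. Let $D_0^+$ be the diagram obtained from $D^+$ by the $0$-smoothing of this crossing, with the orientation inherited from $D^+$ (it coincides, as an oriented diagram, with the $1$-smoothing $D_1^-$ of $D^-$ at that crossing, with orientation inherited from $D^-$). Let $D_0^-=D_1^+$ be the diagram obtained by the other smoothing of that crossing (the $1$-smoothing of $D^+$, equivalently the $0$-smoothing of $D^-$), equipped with one arbitrary fixed orientation. Put $c^+ = n_-(D_1^+)-n_-(D^+)$ and $c^- = n_-(D_0^-)-n_-(D^-)$, where $n_-$ denotes the number of negative crossings (so $c^+=c^-+1$). Then for all integers $i,j$ the sequence \[ 0 \to C^{i-2,j-3}(D_0^+) \xrightarrow{\psi_1} C^{i-2,j-4}(D^-) \xrightarrow{\phi} C^{i,j}(D^+) \xrightarrow{\psi_2} C^{i,j-1}(D_0^+) \to 0 \] is exact, where $\psi_1$ is the inclusion map of the short exact sequence $0\to C^{a,b+1}(D_1^-)\to C^{a,b}(D^-)\to C^{a-c^-,b-3c^--1}(D_0^-)\to 0$ (taken with $(a,b)=(i-2,j-4)$), $\psi_2$ is the projection map of the short exact sequence $0\to C^{i-c^+-1,j-3c^+-2}(D_1^+)\to C^{i,j}(D^+)\to C^{i,j-1}(D_0^+)\to 0$, and $\phi=\phi_2\circ\phi_1$ with $\phi_1: C^{i-2,j-4}(D^-)\to C^{(i-2)-c^-,(j-4)-3c^--1}(D_0^-)$ the projection of the first of these short exact sequences and $\phi_2: C^{i-c^+-1,j-3c^+-2}(D_0^-)\to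 C^{i,j}(D^+)$ the inclusion of the second (these two groups are equal since $c^+=c^-+1$ and $D_0^-=D_1^+$).
   Context: Khovanov chain complex over $\mathbb{Q}$: let $D$ be an oriented link diagram with $n$ crossings numbered $1,\dots,n$, $n_+$ positive and $n_-$ negative crossings. Each crossing has a $0$-smoothing and a $1$-smoothing (the standard Khovanov/Kauffman-bracket $A$- and $B$-smoothings). For $\alpha\in\{0,1\}^n$ let $r_\alpha$ be the number of $1$'s and $k_\alpha$ the number of circles of the corresponding full smoothing. Let $V$ be the graded $\mathbb{Q}$-vector space with basis $e,x$, $\deg e=1$, $\deg x=-1$; for a graded space $W$, $W\{l\}^m=W^{m-l}$. Set $V_\alpha=V^{\otimes k_\alpha}\{r_\alpha+n_+-2n_-\}$ and $C^{i,*}(D)=\bigoplus_{r_\alpha=i+n_-}V_\alpha$; an element $v$ of $V_\alpha$ (homogeneous of degree $\deg v$ in $V^{\otimes k_\alpha}$) lies in $C^{i,j}(D)$ with $i=r_\alpha-n_-$ and $j=\deg v+r_\alpha+n_+-2n_-$. The differential $d:C^{i,*}\to C^{i+1,*}$ is the sum over edges $\zeta:\alpha\to\alpha'$ of the cube (changing one $0$ to a $1$) of $(-1)^{\#\{1\text{'s to the left of the changed position}\}}d_\zeta$, where $d_\zeta$ is the identity on circles not touching the changed crossing and is $m$ (merging two circles) or $\Delta$ (splitting one circle), with $m(e\otimes e)=e$, $m(e\otimes x)=m(x\otimes e)=x$, $m(x\otimes x)=0$, $\Delta(e)=e\otimes x+x\otimes e$, $\Delta(x)=x\otimes x$. For a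 positive crossing, the states with that crossing $0$-smoothed give a quotient complex identified (with the indicated shifts) with $C(D_0^+)$ and those with it $1$-smoothed give a subcomplex identified with $C(D_1^+)$, yielding the short exact sequence $0\to C^{i-c^+-1,j-3c^+-2}(D_1^+)\to C^{i,j}(D^+)\to C^{i,j-1}(D_0^+)\to0$; for a negative crossing similarly $0\to C^{i,j+1}(D_1^-)\to C^{i,j}(D^-)\to C^{i-c^-,j-3c^--1}(D_0^-)\to0$, where the first map includes the $1$-smoothed states and the second projects to the $0$-smoothed states. *)

(* Defs.v *)
From mathcomp Require Import all_boot all_order all_algebra.
Set Implicit Arguments. Unset Strict Implicit. Unset Printing Implicit Defensive.
Import GRing.Theory Num.Theory.

(* A diagram with [n] vertices and [m] free (crossingless)
   circles.  Each vertex v has 4 slots (v,0),(v,1),(v,2),(v,3), listed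
   counterclockwise in the plane.  [link] pairs slots joined by an arc.
   A vertex is either a crossing ([iscr v = true]) or a site where a
   crossing has already been smoothed ([iscr v = false]).
   - crossing with [kb v = false]: under strand = slots 0,2; over = 1,3;
   - crossing with [kb v = true] : under strand = slots 1,3; over = 0,2;
   - smoothed site with [kb v = p]: arcs join slot pairs of "pairing p",
     pairing false = {0,1},{2,3}, pairing true = {1,2},{3,0}.
   The 0-smoothing (Kauffman A-smoothing) of a crossing with [kb v = u]
   has pairing u, its 1-smoothing (B-smoothing) has pairing ~~u.       *)

Definition slot (n : nat) := ('I_n * 'I_4)%type.

Record diagram (n m : nat) := Diagram {
  link : slot n -> slot n;
  iscr : 'I_n -> bool;
  kb   : 'I_n -> bool }.

Definition sl4 (i : nat) : 'I_4 := inord (i %% 4).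

Definition rot (n : nat) (s : slot n) : slot n := (s.1, sl4 (s.2 + 1)).

Definition partner (p : bool) (i : 'I_4) : 'I_4 :=
  if odd i == p then sl4 (i + 1) else sl4 (i + 3).

(* the underlying 4-valent ribbon graph is planar (genus 0):
   V - E + F = 2 * #components, with E = 2V *)
Definition nfaces n m (D : diagram n m) : nat :=
  #|[pred s : slot n | froots (fun s => rot (link D s)) s]|.

Definition ncomp n m (D : diagram n m) : nat :=
  #|[pred s : slot n | roots (fun s t : slot n => (s.1 == t.1) || (t == link D s)) s]|.

Definition link_diagram n m (D : diagram n m) : Prop :=
  [/\ forall s, link D (link D s) = s,
      forall s, link D s != s
    & nfaces D = (n + 2 * ncomp D)%N].

(* Orientations: [o s = true] iff the arc at slot s points into the vertex. *)
Definition strand_partner n m (D : diagram n m) (v : 'I_n) (i : 'I_4) : 'I_4 :=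
  if iscr D v then sl4 (i + 2) else partner (kb D v) i.

Definition oriented n m (D : diagram n m) (o : slot n -> bool) : Prop :=
  (forall s, o (link D s) = ~~ o s) /\
  (forall v (i : 'I_4), o (v, strand_partner D v i) = ~~ o (v, i)).

(* sign of a crossing: positive iff under strand and over strand cross
   as a right-handed crossing *)
Definition positive n m (D : diagram n m) (o : slot n -> bool) (v : 'I_n) : bool :=
  o (v, sl4 (kb D v)) == o (v, sl4 (kb D v + 3)).

Definition npos n m (D : diagram n m) o : nat :=
  #|[pred v | iscr D v && positive D o v]|.
Definition nneg n m (D : diagram n m) o : nat :=
  #|[pred v | iscr D v && ~~ positive D o v]|.

Definition flipc n m (D : diagram n m) (k : 'I_n) : diagram n m :=
  Diagram m (link D) (iscr D) (fun v => if v == k then ~~ kb D v else kb D v).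

Definition smooth n m (D : diagram n m) (k : 'I_n) (b : bool) : diagram n m :=
  Diagram m (link D) (fun v => if v == k then false else iscr D v)
    (fun v => if v == k then kb D v (+) b else kb D v).

Definition resp n m (D : diagram n m) (a : {ffun 'I_n -> bool}) (v : 'I_n) : bool :=
  if iscr D v then kb D v (+) a v else kb D v.

Definition rpart n m (D : diagram n m) a (s : slot n) : slot n :=
  (s.1, partner (resp D a s.1) s.2).

(* two slots are adjacent on the resolved 1-manifold of state a *)
Definition adj n m (D : diagram n m) a : rel (slot n) :=
  fun s t => (t == link D s) || (t == rpart D a s).

(* enhanced state: (state, labels of slots (constant on circles),
   labels of free circles); label true = e, false = x *)
Definition Enh (n m : nat) :=
  ({ffun 'I_n -> bool} * {ffun slot n -> bool} * {ffun 'I_m -> bool})%type.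

Definition valid n m (D : diagram n m) (t : Enh n m) : bool :=
  [forall v, ~~ iscr D v ==> ~~ t.1.1 v] &&
  [forall s, forall s', connect (adj D t.1.1) s s' ==> (t.1.2 s == t.1.2 s')].

Definition ncirc n m (D : diagram n m) (t : Enh n m) (b : bool) : nat :=
  (#|[pred s | roots (adj D t.1.1) s && (t.1.2 s == b)]|
   + #|[pred x | t.2 x == b]|)%N.

Definition rk n m (t : Enh n m) : nat := #|[pred v | t.1.1 v]|.

Definition hdeg n m (D : diagram n m) o (t : Enh n m) : int :=
  ((rk t)%:Z - (nneg D o)%:Z)%R.

Definition qdeg n m (D : diagram n m) o (t : Enh n m) : int :=
  ((ncirc D t true)%:Z - (ncirc D t false)%:Z + (rk t)%:Z
   + (npos D o)%:Z - 2 * (nneg D o)%:Z)%R.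

(* C^{i,j}(D) : the Q-vector space with basis the valid enhanced states of
   bidegree (i,j), realised as the rational functions supported on them. *)
Definition inKh n m (D : diagram n m) o (i j : int) (f : {ffun Enh n m -> rat}) : Prop :=
  forall t, f t != 0%R -> [/\ valid D t, hdeg D o t = i & qdeg D o t = j].

(* inclusion of the states with crossing k 1-smoothed, and projection to the
   states with crossing k 0-smoothed *)
Definition setk n (a : {ffun 'I_n -> bool}) (k : 'I_n) (b : bool) : {ffun 'I_n -> bool} :=
  [ffun v => if v == k then b else a v].

Definition incl n m (k : 'I_n) (f : {ffun Enh n m -> rat}) : {ffun Enh n m -> rat} :=
  [ffun t : Enh n m => if t.1.1 k then f (setk t.1.1 k false, t.1.2, t.2) else 0%R].

Definition proj n m (k : 'I_n) (g : {ffun Enh n m -> rat}) : {ffun Enh n m -> rat} :=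
  [ffun t : Enh n m => if t.1.1 k then 0%R else g t].

Definition exact4 (T : finType) (A B C E : {ffun T -> rat} -> Prop)
  (f g h : {ffun T -> rat} -> {ffun T -> rat}) : Prop :=
  [/\ (forall x, A x -> B (f x)) /\ (forall x, B x -> C (g x)) /\
      (forall x, C x -> E (h x)),
      (forall x y, A x -> A y -> f x = f y -> x = y),
      (forall y, B y -> (g y = 0%R <-> exists2 x, A x & y = f x)),
      (forall z, C z -> (h z = 0%R <-> exists2 y, B y & z = g y))
    & (forall w, E w -> exists2 z, C z & w = h z)].

(* Main.v *)
Require Import Defs.
From mathcomp Require Import all_boot all_order all_algebra.
From mathcomp Require Import zify zify_algebra.
From Stdlib Require Import FunctionalExtensionality.
Set Implicit Arguments. Unset Strict Implicit. Unset Printing Implicit Defensive.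

Section Helpers.
Variables (n m : nat).

Lemma setk_k (a : {ffun 'I_n -> bool}) k b : setk a k b k = b.
Proof. by rewrite /setk ffunE eqxx. Qed.

Lemma setk_id (a : {ffun 'I_n -> bool}) k b : a k = b -> setk a k b = a.
Proof. by move=> H; apply/ffunP=> v; rewrite ffunE; case: eqP => // ->. Qed.

Lemma setkK (a : {ffun 'I_n -> bool}) k b c : setk (setk a k b) k c = setk a k c.
Proof. by apply/ffunP=> v; rewrite !ffunE; case: eqP. Qed.

Lemma card_k (P : pred 'I_n) k : #|P| = (P k + #|[pred v | (v != k) && P v]|)%N.
Proof.
rewrite (cardD1 k); congr (_ + _)%N; apply: eq_card => v; by rewrite !inE.
Qed.

Definition cnt (a : {ffun 'I_n -> bool}) (k : 'I_n) := #|[pred v | (v != k) && a v]|.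

Lemma rk_setk (t : Enh n m) k b :
  rk (setk t.1.1 k b, t.1.2, t.2) = (b + cnt t.1.1 k)%N.
Proof.
rewrite /rk (card_k _ k) /= setk_k; congr (_ + _)%N; apply: eq_card => v.
by rewrite !inE ffunE; case: eqP.
Qed.

Lemma rk_k (t : Enh n m) k :
  rk t = (t.1.1 k + cnt t.1.1 k)%N.
Proof. by rewrite /rk (card_k _ k). Qed.

Lemma adj_eq (D D' : diagram n m) a a' :
  link D = link D' -> (forall v, resp D a v = resp D' a' v) -> adj D a = adj D' a'.
Proof.
move=> HL HR; apply: functional_extensionality => s; apply: functional_extensionality => t.
by rewrite /adj /rpart HL HR.
Qed.

Lemma ncirc_eq (D D' : diagram n m) (t t' : Enh n m) b :
  adj D t.1.1 = adj D' t'.1.1 -> t.1.2 = t'.1.2 -> t.2 = t'.2 ->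
  ncirc D t b = ncirc D' t' b.
Proof. by move=> H1 H2 H3; rewrite /ncirc H1 H2 H3. Qed.

Lemma valid_eq (D D' : diagram n m) (t t' : Enh n m) :
  adj D t.1.1 = adj D' t'.1.1 -> t.1.2 = t'.1.2 ->
  [forall v, ~~ iscr D' v ==> ~~ t'.1.1 v] ->
  valid D t -> valid D' t'.
Proof. by move=> H1 H2 H3 /andP[_ H]; rewrite /valid H3 -H1 -H2. Qed.

End Helpers.

Lemma inKh_smooth n m (D : diagram n m) k b o i j f (t : Enh n m) :
  inKh (smooth D k b) o i j f -> t.1.1 k -> f t = 0%R.
Proof.
move=> H Hk; apply/eqP; apply: contraTT Hk => /H [/andP[/forallP/(_ k)]].
by rewrite /= eqxx /= => /negPf ->.
Qed.

Lemma pos_flip n m (D : diagram n m) o k v :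
  (forall i : 'I_4, o (k, sl4 (i + 2)) = ~~ o (k, i)) ->
  positive (flipc D k) o v = if v == k then ~~ positive D o k else positive D o v.
Proof.
move=> S; rewrite /positive /=; case: (eqVneq v k) => [->|_] //.
have E1 : sl4 (sl4 1 + 2) = sl4 3 by apply/val_inj; rewrite /sl4 /= !inordK.
have E3 : sl4 (1 + 3) = sl4 0 by apply/val_inj; rewrite /sl4 /= !inordK.
have E4 : sl4 (0 + 3) = sl4 3 by [].
have S1 := S (sl4 1); rewrite E1 in S1.
case: (kb D k) => /=; rewrite ?E3 ?E4 ?S1;
  case: (o (k, sl4 1)); case: (o (k, sl4 0)) => //.
Qed.

Lemma zffE (T : finType) (t : T) : (0%R : {ffun T -> rat}) t = 0%R.
Proof. by rewrite /GRing.zero /= ffunE. Qed.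

Ltac fin := rewrite ?add0n ?add1n; try set X := ncirc _ _ true; try set Y := ncirc _ _ false;
  try set Z := rk _; lia.

Unset Implicit Arguments.

Theorem mainTheorem1 (n m : nat) (Dp : diagram n m) (k : 'I_n)
    (o o' : slot n -> bool) :
  link_diagram Dp -> (forall v, iscr Dp v) ->
  oriented Dp o -> positive Dp o k ->
  oriented (smooth Dp k true) o' ->
  forall i j : int,
  let Dm := flipc Dp k in
  let D0p := smooth Dp k false in
  let D0m := smooth Dp k true in
  let psi1 := @incl n m k in
  let psi2 := @proj n m k in
  let phi1 := @proj n m k in
  let phi2 := @incl n m k in
  let phi := fun g => phi2 (phi1 g) in
  exact4 (inKh D0p o (i - 2) (j - 3)%R) (inKh Dm o (i - 2) (j - 4))%R
         (inKh Dp o i j) (inKh D0p o i (j - 1)%R) psi1 phi psi2.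
Proof.
move=> HL Hcr [Ho1 Ho2] Hpos Ho' i j Dm D0p D0m psi1 psi2 phi1 phi2 phi.
have R1 : forall a, adj D0p a = adj Dm (setk a k true).
  move=> a; apply: adj_eq => // v; rewrite /resp /= ffunE Hcr.
  by case: (v == k); case: (kb Dp v); case: (a v).
have R2 : forall a, adj Dm (setk a k false) = adj Dp (setk a k true).
  move=> a; apply: adj_eq => // v; rewrite /resp /= !ffunE !Hcr.
  by case: (v == k); case: (kb Dp v); case: (a v).
have R3 : forall a, adj D0p a = adj Dp (setk a k false).
  move=> a; apply: adj_eq => // v; rewrite /resp /= !ffunE !Hcr.
  by case: (v == k); case: (kb Dp v); case: (a v).
set npp := #|[pred v | (v != k) && positive Dp o v]|.
set nnq := #|[pred v | (v != k) && ~~ positive Dp o v]|.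
have PosDm : forall v, positive Dm o v = if v == k then ~~ positive Dp o k else positive Dp o v.
  move=> v; apply: pos_flip => i0; have := Ho2 k i0; by rewrite /strand_partner Hcr.
have CpP : npos Dp o = npp.+1.
  rewrite /npos (card_k _ k) /= Hcr Hpos; congr (_ + _)%N.
  by apply: eq_card => v; rewrite !inE Hcr.
have CpN : nneg Dp o = nnq.
  rewrite /nneg (card_k _ k) /= ?inE Hcr Hpos; congr (_ + _)%N.
  by apply: eq_card => v; rewrite !inE Hcr.
have CmP : npos Dm o = npp.
  rewrite /npos (card_k _ k) /= ?inE Hcr PosDm eqxx Hpos; congr (_ + _)%N.
  by apply: eq_card => v; rewrite !inE Hcr PosDm; case: eqP.
have CmN : nneg Dm o = nnq.+1.
  rewrite /nneg (card_k _ k) /= ?inE Hcr PosDm eqxx Hpos; rewrite add1n; congr (_.+1)%N.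
  by apply: eq_card => v; rewrite !inE Hcr PosDm; case: eqP.
have C0P : npos D0p o = npp.
  rewrite /npos (card_k _ k) /= ?inE eqxx /=; congr (_ + _)%N.
  apply: eq_card => v; rewrite !inE; case: eqP => //= /eqP nvk.
  by rewrite Hcr /positive /= (negPf nvk).
have C0N : nneg D0p o = nnq.
  rewrite /nneg (card_k _ k) /= ?inE eqxx /=; congr (_ + _)%N.
  apply: eq_card => v; rewrite !inE; case: eqP => //= /eqP nvk.
  by rewrite Hcr /positive /= (negPf nvk).

have phiE : forall (y : {ffun Enh n m -> rat}) (a : {ffun 'I_n -> bool}) (l : {ffun slot n -> bool}) (fr : {ffun 'I_m -> bool}),
    phi y (a, l, fr) = if a k then y (setk a k false, l, fr) else 0%R.
  by move=> y a l fr; rewrite /phi /phi2 /phi1 /incl /proj ffunE /= ffunE /= setk_k.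
have inclE : forall (y : {ffun Enh n m -> rat}) (a : {ffun 'I_n -> bool}) (l : {ffun slot n -> bool}) (fr : {ffun 'I_m -> bool}),
    incl k y (a, l, fr) = if a k then y (setk a k false, l, fr) else 0%R.
  by move=> y a l fr; rewrite /incl ffunE.
have projE : forall (y : {ffun Enh n m -> rat}) (a : {ffun 'I_n -> bool}) (l : {ffun slot n -> bool}) (fr : {ffun 'I_m -> bool}),
    proj k y (a, l, fr) = if a k then 0%R else y (a, l, fr).
  by move=> y a l fr; rewrite /proj ffunE.
have allcr : forall a : {ffun 'I_n -> bool}, [forall v, ~~ iscr Dp v ==> ~~ a v].
  by move=> a; apply/forallP => v; rewrite Hcr.
have cr0 : forall a : {ffun 'I_n -> bool}, a k = false -> [forall v, ~~ iscr D0p v ==> ~~ a v].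
  move=> a Ha; apply/forallP => v /=; case: eqP => [->|]; by rewrite ?Ha ?Hcr.
split; first split; [|split|..].
-
  move=> f Hf [[a l] fr]; rewrite /psi1 inclE; case Ha: (a k); last by rewrite eqxx.
  move=> /Hf [Hv Hh Hq].
  have Adj : adj D0p (setk a k false) = adj Dm a by rewrite R1 setkK setk_id.
  split.
  + exact: (valid_eq (t := (setk a k false, l, fr)) (t' := (a, l, fr)) Adj).
  + move: Hh; rewrite /hdeg (rk_setk (a, l, fr)) (rk_k (a, l, fr) k) /= Ha CmN C0N. rewrite ?add0n ?add1n. fin.
  + move: Hq; rewrite /qdeg (ncirc_eq (t := (setk a k false, l, fr)) (t' := (a, l, fr)) true Adj) //.
    rewrite (ncirc_eq (t := (setk a k false, l, fr)) (t' := (a, l, fr)) false Adj) //.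
    rewrite (rk_setk (a, l, fr)) (rk_k (a, l, fr) k) /= Ha CmN C0N CmP C0P. fin.
-
  move=> f Hf [[a l] fr]; rewrite phiE; case Ha: (a k); last by rewrite eqxx.
  move=> /Hf [Hv Hh Hq].
  have Adj : adj Dm (setk a k false) = adj Dp a by rewrite R2 setk_id.
  split.
  + exact: (valid_eq (t := (setk a k false, l, fr)) (t' := (a, l, fr)) Adj).
  + move: Hh; rewrite /hdeg (rk_setk (a, l, fr)) (rk_k (a, l, fr) k) /= Ha CmN CpN. fin.
  + move: Hq; rewrite /qdeg (ncirc_eq (t := (setk a k false, l, fr)) (t' := (a, l, fr)) true Adj) //.
    rewrite (ncirc_eq (t := (setk a k false, l, fr)) (t' := (a, l, fr)) false Adj) //.
    rewrite (rk_setk (a, l, fr)) (rk_k (a, l, fr) k) /= Ha CmN CpN CmP CpP. fin.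
-
  move=> f Hf [[a l] fr]; rewrite /psi2 projE; case Ha: (a k); first by rewrite eqxx.
  move=> /Hf [Hv Hh Hq].
  have Adj : adj Dp a = adj D0p a by rewrite R3 setk_id.
  split.
  + exact: (valid_eq (t := (a, l, fr)) (t' := (a, l, fr)) Adj _ (cr0 a Ha)).
  + by move: Hh; rewrite /hdeg CpN C0N.
  + move: Hq; rewrite /qdeg (ncirc_eq (t := (a, l, fr)) (t' := (a, l, fr)) true Adj) //.
    rewrite (ncirc_eq (t := (a, l, fr)) (t' := (a, l, fr)) false Adj) //.
    rewrite CpN C0N CpP C0P. rewrite ?add0n ?add1n. fin.
-
  move=> x y Hx Hy Exy; apply/ffunP => [[[a l] fr]].
  case Ha: (a k).
    by rewrite (inKh_smooth (t := (a, l, fr)) Hx) ?(inKh_smooth (t := (a, l, fr)) Hy).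
  have := congr1 (fun g : {ffun Enh n m -> rat} => g (setk a k true, l, fr)) Exy.
  by rewrite /psi1 /= !inclE setk_k setkK setk_id.
-
  move=> y Hy; split.
  + move=> H0.
    exists [ffun t : Enh n m => if t.1.1 k then 0%R else y (setk t.1.1 k true, t.1.2, t.2)].
      move=> [[a l] fr]; rewrite ffunE /=; case Ha: (a k); first by rewrite eqxx.
      move=> /Hy [Hv Hh Hq].
      have Adj : adj Dm (setk a k true) = adj D0p a by rewrite R1.
      split.
      * exact: (valid_eq (t := (setk a k true, l, fr)) (t' := (a, l, fr)) Adj _ (cr0 a Ha)).
      * move: Hh; rewrite /hdeg (rk_setk (a, l, fr)) (rk_k (a, l, fr) k) /= Ha CmN C0N. fin.
      * move: Hq; rewrite /qdeg (ncirc_eq (t := (setk a k true, l, fr)) (t' := (a, l, fr)) true Adj) //.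
        rewrite (ncirc_eq (t := (setk a k true, l, fr)) (t' := (a, l, fr)) false Adj) //.
        rewrite (rk_setk (a, l, fr)) (rk_k (a, l, fr) k) /= Ha CmN C0N CmP C0P. fin.
    apply/ffunP => [[[a l] fr]]; rewrite /psi1 inclE ffunE /= setk_k setkK.
    case Ha: (a k); first by rewrite setk_id.
    have := congr1 (fun g : {ffun Enh n m -> rat} => g (setk a k true, l, fr)) H0.
    by rewrite phiE setk_k setkK (setk_id Ha) => ->; rewrite /GRing.zero /= ffunE.
  + move=> [x Hx ->]; apply/ffunP => [[[a l] fr]].
    rewrite phiE /psi1 inclE setk_k /GRing.zero /= ffunE; by case: (a k).
-
  move=> z Hz; split.
  + move=> H0.
    exists [ffun t : Enh n m => if t.1.1 k then 0%R else z (setk t.1.1 k true, t.1.2, t.2)].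
      move=> [[a l] fr]; rewrite ffunE /=; case Ha: (a k); first by rewrite eqxx.
      move=> /Hz [Hv Hh Hq].
      have Adj : adj Dp (setk a k true) = adj Dm a.
        by rewrite -R2 setk_id.
      split.
      * exact: (valid_eq (t := (setk a k true, l, fr)) (t' := (a, l, fr)) Adj _ (allcr a)).
      * move: Hh; rewrite /hdeg (rk_setk (a, l, fr)) (rk_k (a, l, fr) k) /= Ha CmN CpN. fin.
      * move: Hq; rewrite /qdeg (ncirc_eq (t := (setk a k true, l, fr)) (t' := (a, l, fr)) true Adj) //.
        rewrite (ncirc_eq (t := (setk a k true, l, fr)) (t' := (a, l, fr)) false Adj) //.
        rewrite (rk_setk (a, l, fr)) (rk_k (a, l, fr) k) /= Ha CmN CpN CmP CpP. fin.
    apply/ffunP => [[[a l] fr]]; rewrite phiE ffunE /= setk_k setkK.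
    case Ha: (a k); first by rewrite setk_id.
    have := congr1 (fun g : {ffun Enh n m -> rat} => g (a, l, fr)) H0.
    by rewrite /psi2 projE ffunE Ha.
  + move=> [y Hy ->]; apply/ffunP => [[[a l] fr]].
    by rewrite /psi2 projE phiE ffunE; case: (a k).
-
  move=> w Hw; exists w.
    move=> [[a l] fr] Hnz.
    have Ha : a k = false.
      by apply/negbTE/negP => Ha; move: Hnz; rewrite (inKh_smooth (t := (a, l, fr)) Hw) ?eqxx.
    move: (Hw _ Hnz) => [Hv Hh Hq].
    have Adj : adj D0p a = adj Dp a by rewrite R3 setk_id.
    split.
    + exact: (valid_eq (t := (a, l, fr)) (t' := (a, l, fr)) Adj).
    + by move: Hh; rewrite /hdeg CpN C0N.
    + move: Hq; rewrite /qdeg (ncirc_eq (t := (a, l, fr)) (t' := (a, l, fr)) true Adj) //.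
      rewrite (ncirc_eq (t := (a, l, fr)) (t' := (a, l, fr)) false Adj) //.
      rewrite CpN C0N CpP C0P. fin.
  apply/ffunP => [[[a l] fr]]; rewrite /psi2 projE.
  case Ha: (a k) => //.
  by rewrite (inKh_smooth (t := (a, l, fr)) Hw).
Qed.
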